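(* Let $G=(V,E)$ be a naturally ordered DAG. For every finite set $f_1,\dots,f_r\in\mathbb R[\Sigma]$ there exist $s\in S_G$ and $h_1,\dots,h_r\in\mathbb R[\Sigma_E]$ such that $sf_i-h_i\in I_G$ for $i=1,\dots,r$.
   Context: $\mathbb R[\Sigma]$ is the polynomial ring in symmetric variables $\sigma_{ij}=\sigma_{ji}$, $i,j\in V=[p]$; $\mathbb R[\Sigma_E]\subseteq\mathbb R[\Sigma]$ is the subring generated by $\sigma_{ii}$ ($i\in V$) and $\sigma_{ij}$ ($ij\in E$). $G$ naturally ordered means $ij\in E\Rightarrow i<j$. $I_G$ is the ideal generated by $|\Sigma_{ij|\mathrm{pa}(j)}|$ for $i<j$ with $ij\notin E$, where $\Sigma_{ij|K}$ has rows $(i,K)$ and columns $(j,K)$. $S_G$ is the multiplicatively closed set $\{\prod_{i\in V}|\Sigma_{\mathrm{pa}(i)}|^{k_i}:k_i\in\mathbb N\}$. *)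

(* Defs.v *)
From HB Require Import structures.
From mathcomp Require Import all_boot all_order all_algebra.
From mathcomp Require Import reals.
From mathcomp Require Import mpoly.

Set Implicit Arguments.
Unset Strict Implicit.
Unset Printing Implicit Defensive.

Import Order.TTheory GRing.Theory Num.Theory.
Local Open Scope ring_scope.

(* Ambient polynomial ring: one variable X_(i,j) for every ordered pair
   (i,j) in [p]x[p]; the symmetric variable sigma_ij = sigma_ji is the
   variable indexed by (min(i,j), max(i,j)).  The ring R[Sigma] is the
   subring of polynomials using only the variables (i,j) with i <= j. *)
Definition SPoly (R : realType) (p : nat) := {mpoly R[p * p]}.

Definition sigma (R : realType) (p : nat) (i j : 'I_p) : SPoly R p :=
  if (i <= j)%N then 'X_(mxvec_index i j) else 'X_(mxvec_index j i).

Definition uses_only (R : realType) (p : nat) (P : 'I_(p * p) -> Prop)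
  (f : SPoly R p) : Prop :=
  forall m, m \in msupp f -> forall v : 'I_(p * p), (m v != 0)%N -> P v.

Definition in_RSigma (R : realType) (p : nat) (f : SPoly R p) : Prop :=
  uses_only (fun v => exists i j : 'I_p, (i <= j)%N /\ v = mxvec_index i j) f.

(* A DAG on V = [p]: E i j means the directed edge i -> j.
   Naturally ordered: ij in E implies i < j. *)
Definition naturally_ordered (p : nat) (E : rel 'I_p) : Prop :=
  forall i j, E i j -> (i < j)%N.

Definition in_RSigmaE (R : realType) (p : nat) (E : rel 'I_p) (f : SPoly R p)
  : Prop :=
  uses_only (fun v => exists i j : 'I_p,
               (i == j \/ E i j) /\ v = mxvec_index i j) f.

Definition pa (p : nat) (E : rel 'I_p) (j : 'I_p) : {set 'I_p} :=
  [set i | E i j].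

(* determinant of the submatrix of Sigma with rows rs and columns cs
   (given as sequences of equal length; d is an unused default) *)
Definition minor (R : realType) (p : nat) (d : 'I_p) (rs cs : seq 'I_p)
  : SPoly R p :=
  \det (\matrix_(a < size rs, b < size rs)
          sigma R (nth d rs a) (nth d cs b)).

Definition cond_minor (R : realType) (p : nat) (i j : 'I_p) (K : {set 'I_p})
  : SPoly R p := minor R i (i :: enum K) (j :: enum K).

(* |Sigma_K| (principal minor; = 1 for K empty) *)
Definition pminor (R : realType) (p : nat) (K : {set 'I_p}) : SPoly R p :=
  \det (\matrix_(a < #|K|, b < #|K|)
          sigma R (enum_val a) (enum_val b)).

Definition in_IG (R : realType) (p : nat) (E : rel 'I_p) (f : SPoly R p) : Prop :=
  exists c : 'I_p -> 'I_p -> SPoly R p,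
    (forall i j, in_RSigma (c i j)) /\
    f = \sum_(i < p) \sum_(j < p | (i < j)%N && ~~ E i j)
          c i j * cond_minor R i j (pa E j).

Definition in_SG (R : realType) (p : nat) (E : rel 'I_p) (s : SPoly R p) : Prop :=
  exists k : 'I_p -> nat, s = \prod_(i < p) pminor R (pa E i) ^+ k i.

(* Main.v *)
Require Import Defs.
From HB Require Import structures.
From mathcomp Require Import all_boot all_order all_algebra.
From mathcomp Require Import reals.
From mathcomp Require Import mpoly.
From mathcomp Require Import ring.
From Stdlib Require Import IndefiniteDescription.
Import Order.TTheory GRing.Theory Num.Theory.
Local Open Scope ring_scope.
Set Implicit Arguments.
Unset Strict Implicit.

Lemma uo_mono (R : realType) (p : nat) (P Q : 'I_(p * p) -> Prop) (f : SPoly R p) :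
  (forall v, P v -> Q v) -> uses_only P f -> uses_only Q f.
Proof. by move=> PQ H m Hm v Hv; apply/PQ/(H m Hm v Hv). Qed.

Lemma uo_C (R : realType) (p : nat) (P : 'I_(p * p) -> Prop) (c : R) :
  uses_only P (c%:MP : SPoly R p).
Proof.
move=> m; rewrite msuppC; case: eqP => // _; rewrite inE => /eqP -> v.
by rewrite mnm0E.
Qed.

Lemma uo_D (R : realType) (p : nat) (P : 'I_(p * p) -> Prop) (f g : SPoly R p) :
  uses_only P f -> uses_only P g -> uses_only P (f + g).
Proof.
move=> Hf Hg m /msuppD_le; rewrite mem_cat => /orP [] Hm.
  exact: Hf. exact: Hg.
Qed.

Lemma uo_M (R : realType) (p : nat) (P : 'I_(p * p) -> Prop) (f g : SPoly R p) :
  uses_only P f -> uses_only P g -> uses_only P (f * g).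
Proof.
move=> Hf Hg m /msuppM_le /allpairsP [[m1 m2] /= [H1 H2 ->]] v.
rewrite mnmDE; case E1: (m1 v == 0)%N.
  by move/eqP: E1 => ->; rewrite add0n; apply: Hg.
by move=> _; apply: (Hf m1 H1); rewrite E1.
Qed.

Lemma uo_X (R : realType) (p : nat) (P : 'I_(p * p) -> Prop) (i : 'I_(p * p)) :
  P i -> uses_only P ('X_i : SPoly R p).
Proof.
move=> Pi m; rewrite msuppX inE => /eqP -> v; rewrite mnm1E.
by case: (i =P v) => [<- |].
Qed.

Lemma uo_N (R : realType) (p : nat) (P : 'I_(p * p) -> Prop) (f : SPoly R p) :
  uses_only P f -> uses_only P (- f).
Proof.
move=> Hf; rewrite -mulN1r -mpolyC1 -mpolyCN.
by apply: uo_M => //; apply: uo_C.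
Qed.

Lemma uo_ind (R : realType) (p : nat) (Q : 'I_(p * p) -> Prop)
  (P : SPoly R p -> Prop) :
  (forall c : R, P c%:MP) -> (forall f g, P f -> P g -> P (f + g)) ->
  (forall f g, P f -> P g -> P (f * g)) -> (forall v, Q v -> P 'X_v) ->
  forall f, uses_only Q f -> P f.
Proof.
move=> HC HD HM HX f Hf; rewrite (mpolyE f).
have H0 : P 0 by rewrite -mpolyC0.
rewrite big_seq; apply: (big_ind P); [exact: H0 | exact: (HD) |]; move=> m Hm.

rewrite -mul_mpolyC; apply: (HM); first exact: HC.
rewrite mpolyXE_id; apply: (big_ind P); first by rewrite -mpolyC1.
  exact: (HM).
move=> i Hi /=; have [->|nz] := eqVneq (m i) 0%N; first by rewrite expr0 -mpolyC1.
have Qi : Q i by apply: (Hf m Hm i).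
elim: (m i) => [|k IH]; first by rewrite expr0 -mpolyC1.
by rewrite exprS; apply: (HM) => //; apply: HX.
Qed.

Lemma RS_C (R : realType) (p : nat) (c : R) : in_RSigma (c%:MP : SPoly R p).
Proof. exact: uo_C. Qed.
Lemma RS_D (R : realType) (p : nat) (f g : SPoly R p) :
  in_RSigma f -> in_RSigma g -> in_RSigma (f + g).
Proof. exact: uo_D. Qed.
Lemma RS_M (R : realType) (p : nat) (f g : SPoly R p) :
  in_RSigma f -> in_RSigma g -> in_RSigma (f * g).
Proof. exact: uo_M. Qed.
Lemma RS_N (R : realType) (p : nat) (f : SPoly R p) :
  in_RSigma f -> in_RSigma (- f).
Proof. exact: uo_N. Qed.
Lemma RS_0 (R : realType) (p : nat) : in_RSigma (0 : SPoly R p).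
Proof. by rewrite -mpolyC0; apply: RS_C. Qed.
Lemma RS_1 (R : realType) (p : nat) : in_RSigma (1 : SPoly R p).
Proof. by rewrite -mpolyC1; apply: RS_C. Qed.

Lemma sigma_sym (R : realType) (p : nat) (i j : 'I_p) :
  sigma R i j = sigma R j i.
Proof.
rewrite /sigma; case: (leqP i j) => H1; case: (leqP j i) => H2 //.
  by have -> : i = j by apply/val_inj/anti_leq; rewrite H1 H2.
by have := ltn_trans H1 H2; rewrite ltnn.
Qed.

Lemma sigma_RS (R : realType) (p : nat) (i j : 'I_p) : in_RSigma (sigma R i j).
Proof.
rewrite /sigma; case: (leqP i j) => H; apply: uo_X.
  by exists i, j.
by exists j, i; split => //; apply: ltnW.
Qed.

Lemma RE_RS (R : realType) (p : nat) (E : rel 'I_p) (f : SPoly R p) :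
  naturally_ordered E -> in_RSigmaE E f -> in_RSigma f.
Proof.
move=> Hn H; apply: (uo_mono _ H) => v [i [j [[/eqP <-|Hij] ->]]]; first by exists i, i.
by exists i, j; split => //; apply: ltnW; apply: Hn.
Qed.

Lemma sigma_RE (R : realType) (p : nat) (E : rel 'I_p) (i j : 'I_p) :
  naturally_ordered E -> i = j \/ E i j -> in_RSigmaE E (sigma R i j).
Proof.
move=> Hn [<-|Hij]; rewrite /sigma.
  by rewrite leqnn; apply: uo_X; exists i, i; split => //; left.
by rewrite ltnW ?Hn //; apply: uo_X; exists i, j; split => //; right.
Qed.

Lemma RE_C (R : realType) (p : nat) (E : rel 'I_p) (c : R) :
  in_RSigmaE E (c%:MP : SPoly R p).
Proof. exact: uo_C. Qed.
Lemma RE_D (R : realType) (p : nat) (E : rel 'I_p) (f g : SPoly R p) :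
  in_RSigmaE E f -> in_RSigmaE E g -> in_RSigmaE E (f + g).
Proof. exact: uo_D. Qed.
Lemma RE_M (R : realType) (p : nat) (E : rel 'I_p) (f g : SPoly R p) :
  in_RSigmaE E f -> in_RSigmaE E g -> in_RSigmaE E (f * g).
Proof. exact: uo_M. Qed.
Lemma RE_0 (R : realType) (p : nat) (E : rel 'I_p) : in_RSigmaE E (0 : SPoly R p).
Proof. by rewrite -mpolyC0; apply: RE_C. Qed.
Lemma RE_1 (R : realType) (p : nat) (E : rel 'I_p) : in_RSigmaE E (1 : SPoly R p).
Proof. by rewrite -mpolyC1; apply: RE_C. Qed.

Lemma IG_0 (R : realType) (p : nat) (E : rel 'I_p) : in_IG E (0 : SPoly R p).
Proof.
exists (fun _ _ => 0); split => [i j|]; first exact: RS_0.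
by rewrite big1 // => i _; rewrite big1 // => j _; rewrite mul0r.
Qed.

Lemma IG_D (R : realType) (p : nat) (E : rel 'I_p) (f g : SPoly R p) :
  in_IG E f -> in_IG E g -> in_IG E (f + g).
Proof.
move=> [c [Hc ->]] [d [Hd ->]]; exists (fun i j => c i j + d i j); split.
  by move=> i j; apply: RS_D.
rewrite -big_split /=; apply: eq_bigr => i _; rewrite -big_split /=.
by apply: eq_bigr => j _; rewrite mulrDl.
Qed.

Lemma IG_M (R : realType) (p : nat) (E : rel 'I_p) (y f : SPoly R p) :
  in_RSigma y -> in_IG E f -> in_IG E (y * f).
Proof.
move=> Hy [c [Hc ->]]; exists (fun i j => y * c i j); split.
  by move=> i j; apply: RS_M.
rewrite mulr_sumr; apply: eq_bigr => i _; rewrite mulr_sumr.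
by apply: eq_bigr => j _; rewrite mulrA.
Qed.

Lemma IG_N (R : realType) (p : nat) (E : rel 'I_p) (f : SPoly R p) :
  in_IG E f -> in_IG E (- f).
Proof. by move=> H; rewrite -mulN1r; apply: IG_M => //; apply/RS_N/RS_1. Qed.

Lemma IG_B (R : realType) (p : nat) (E : rel 'I_p) (f g : SPoly R p) :
  in_IG E f -> in_IG E g -> in_IG E (f - g).
Proof. by move=> Hf Hg; apply: IG_D => //; apply: IG_N. Qed.

Lemma IG_gen (R : realType) (p : nat) (E : rel 'I_p) (i j : 'I_p) :
  (i < j)%N -> ~~ E i j -> in_IG E (cond_minor R i j (pa E j)).
Proof.
move=> Hij HE.
exists (fun a b => if (a == i) && (b == j) then 1 else 0); split.
  by move=> a b; case: ifP => _; [apply: RS_1 | apply: RS_0].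
rewrite (bigD1 i) //= (bigD1 j) /=; last by rewrite Hij HE.
rewrite !eqxx mul1r big1 ?addr0; last first.
  by move=> b /andP [_ /negbTE ->]; rewrite andbF mul0r.
rewrite big1 ?addr0 // => a /negbTE Ha; rewrite big1 // => b _.
by rewrite Ha mul0r.
Qed.

Lemma fchoice (A B : Type) (P : A -> B -> Prop) :
  (forall a, exists b, P a b) -> exists f : A -> B, forall a, P a (f a).
Proof.
move=> H; exists (fun a => proj1_sig (constructive_indefinite_description _ (H a))).
by move=> a; case: (constructive_indefinite_description _ (H a)).
Qed.

Lemma det_closed (R : realType) (p : nat) (P : SPoly R p -> Prop) :
  P 0 -> P 1 -> P (-1) -> (forall f g, P f -> P g -> P (f + g)) ->
  (forall f g, P f -> P g -> P (f * g)) ->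
  forall m (A : 'M[SPoly R p]_m), (forall i j, P (A i j)) -> P (\det A).
Proof.
move=> H0 H1 HN1 HD HM m A HA; rewrite /determinant.
have Hpow : forall k, P ((-1) ^+ k).
  by elim=> [|k IH]; rewrite ?expr0 // exprS; apply: (HM).
apply: (big_ind P) => // s Hs; apply: (HM); first exact: Hpow.
by apply: (big_ind P) => // i Hi; apply: HA.
Qed.

Inductive Gen (R : realType) (p : nat) (n : nat) : SPoly R p -> Prop :=
| GC (c : R) : Gen n c%:MP
| GV (u v : 'I_p) : (u < n)%N -> (v < n)%N -> Gen n (sigma R u v)
| GD f g : Gen n f -> Gen n g -> Gen n (f + g)
| GM f g : Gen n f -> Gen n g -> Gen n (f * g).

Lemma Gen0 (R : realType) (p n : nat) : Gen n (0 : SPoly R p).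
Proof. by rewrite -mpolyC0; apply: GC. Qed.
Lemma Gen1 (R : realType) (p n : nat) : Gen n (1 : SPoly R p).
Proof. by rewrite -mpolyC1; apply: GC. Qed.
Lemma GenN1 (R : realType) (p n : nat) : Gen n (-1 : SPoly R p).
Proof. by rewrite -mpolyC1 -mpolyCN; apply: GC. Qed.

Lemma Gen_det (R : realType) (p n m : nat) (A : 'M[SPoly R p]_m) :
  (forall i j, Gen n (A i j)) -> Gen n (\det A).
Proof.
apply: det_closed; [exact: Gen0|exact: Gen1|exact: GenN1|exact: GD|exact: GM].
Qed.

Lemma Gen_RS (R : realType) (p n : nat) (g : SPoly R p) : Gen n g -> in_RSigma g.
Proof.
elim=> *; [exact: RS_C | exact: sigma_RS | exact: RS_D | exact: RS_M].
Qed.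

Lemma Gen_mono (R : realType) (p n n' : nat) (g : SPoly R p) :
  (n <= n')%N -> Gen n g -> Gen n' g.
Proof.
move=> Hn; elim=> *; [exact: GC | apply: GV; exact: leq_trans Hn | exact: GD | exact: GM].
Qed.

Lemma pminor_Gen (R : realType) (p : nat) (E : rel 'I_p) (i : 'I_p) :
  naturally_ordered E -> Gen (val i) (pminor R (pa E i)).
Proof.
move=> Hn; apply: Gen_det => a b; rewrite mxE; apply: GV; apply: Hn;
  by have := enum_valP a; have := enum_valP b; rewrite !inE.
Qed.

Definition Sk (R : realType) (p : nat) (E : rel 'I_p) (k : 'I_p -> nat) : SPoly R p :=
  \prod_(i < p) pminor R (pa E i) ^+ k i.

Lemma Sk_add (R : realType) (p : nat) (E : rel 'I_p) (k1 k2 : 'I_p -> nat) :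
  Sk R E (fun i => k1 i + k2 i)%N = Sk R E k1 * Sk R E k2.
Proof. by rewrite /Sk -big_split; apply: eq_bigr => i _; rewrite exprD. Qed.

Lemma Sk0 (R : realType) (p : nat) (E : rel 'I_p) (k : 'I_p -> nat) :
  (forall i, k i = 0%N) -> Sk R E k = 1.
Proof. by move=> H; rewrite /Sk big1 // => i _; rewrite H expr0. Qed.

Lemma Sk_Gen (R : realType) (p : nat) (E : rel 'I_p) (n : nat) (k : 'I_p -> nat) :
  naturally_ordered E -> (forall i : 'I_p, (n < i)%N -> k i = 0%N) ->
  Gen n (Sk R E k).
Proof.
move=> Hn Hk; rewrite /Sk; apply: (big_ind (Gen n)); [exact: Gen1|exact: GM|].
move=> i _; case: (leqP i n) => Hi.
  elim: (k i) => [|m IH]; rewrite ?expr0; first exact: Gen1.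
  by rewrite exprS; apply: GM => //; apply: Gen_mono Hi (pminor_Gen _ _ Hn).
by rewrite Hk // expr0; apply: Gen1.
Qed.

Definition Good (R : realType) (p : nat) (E : rel 'I_p) (n : nat) (g : SPoly R p) :=
  in_RSigma g /\ exists k : 'I_p -> nat, (forall i : 'I_p, (n <= i)%N -> k i = 0%N) /\
    exists h, in_RSigmaE E h /\ in_IG E (Sk R E k * g - h).

Lemma Good_mono (R : realType) (p : nat) (E : rel 'I_p) (n n' : nat) (g : SPoly R p) :
  (n <= n')%N -> Good E n g -> Good E n' g.
Proof.
move=> Hn [Hg [k [Hk H]]]; split => //; exists k; split => // i Hi.
by apply: Hk; apply: leq_trans Hi.
Qed.

Lemma Good_RE (R : realType) (p : nat) (E : rel 'I_p) (n : nat) (g : SPoly R p) :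
  naturally_ordered E -> in_RSigmaE E g -> Good E n g.
Proof.
move=> Hn Hg; split; first exact: RE_RS Hg.
exists (fun _ => 0%N); split => //; exists g; split => //.
by rewrite Sk0 // mul1r subrr; apply: IG_0.
Qed.

Lemma Good_C (R : realType) (p : nat) (E : rel 'I_p) (n : nat) (c : R) :
  naturally_ordered E -> Good E n (c%:MP : SPoly R p).
Proof. by move=> Hn; apply: Good_RE => //; apply: RE_C. Qed.

Lemma Sk_RS (R : realType) (p : nat) (E : rel 'I_p) (k : 'I_p -> nat) :
  naturally_ordered E -> in_RSigma (Sk R E k).
Proof. by move=> Hn; apply: (@Gen_RS _ _ p); apply: Sk_Gen => // i; rewrite ltnNge ltnW. Qed.

Lemma Good_M (R : realType) (p : nat) (E : rel 'I_p) (n : nat) (g1 g2 : SPoly R p) :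
  naturally_ordered E -> Good E n g1 -> Good E n g2 -> Good E n (g1 * g2).
Proof.
move=> Hn [R1 [k1 [Hk1 [h1 [Hh1 I1]]]]] [R2 [k2 [Hk2 [h2 [Hh2 I2]]]]].
split; first exact: RS_M.
exists (fun i => k1 i + k2 i)%N; split.
  by move=> i Hi; rewrite Hk1 // Hk2.
exists (h1 * h2); split; first exact: RE_M.
have -> : Sk R E (fun i => k1 i + k2 i)%N * (g1 * g2) - h1 * h2 =
  (Sk R E k2 * g2) * (Sk R E k1 * g1 - h1) + h1 * (Sk R E k2 * g2 - h2).
  rewrite Sk_add; ring.
apply: IG_D; apply: IG_M => //; last exact: RE_RS Hh1.
by apply: RS_M => //; apply: Sk_RS.
Qed.

Definition CMF (R : realType) (p : nat) (E : rel 'I_p) (n : nat) :=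
  forall r (g : 'I_r -> SPoly R p), (forall i, Good E n (g i)) ->
  exists k : 'I_p -> nat, (forall i : 'I_p, (n <= i)%N -> k i = 0%N) /\
  exists h : 'I_r -> SPoly R p, forall i,
    in_RSigmaE E (h i) /\ in_IG E (Sk R E k * g i - h i).

Definition Main (R : realType) (p : nat) (E : rel 'I_p) (n : nat) :=
  forall g : SPoly R p, Gen n g -> Good E n g.

Lemma Sk_ext (R : realType) (p : nat) (E : rel 'I_p) (k k' : 'I_p -> nat) :
  (forall i, k i = k' i) -> Sk R E k = Sk R E k'.
Proof. by move=> H; apply: eq_bigr => i _; rewrite H. Qed.

Lemma CMF0 (R : realType) (p : nat) (E : rel 'I_p) : CMF R E 0.
Proof.
move=> r g Hg.
have [h Hh] : exists h : 'I_r -> SPoly R p, forall i,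
    in_RSigmaE E (h i) /\ in_IG E (Sk R E (fun _ => 0%N) * g i - h i).
  apply: (@fchoice _ _ (fun i h => in_RSigmaE E h /\ in_IG E (Sk R E (fun _ => 0%N) * g i - h))).
  move=> i; have [_ [k [Hk [h [H1 H2]]]]] := Hg i.
  exists h; split => //; rewrite (@Sk0 _ _ _ (fun _ => 0%N)) // -(@Sk0 _ _ E k) //.
  by move=> x; apply: Hk.
by exists (fun _ => 0%N); split => //; exists h.
Qed.

Lemma CMF_step (R : realType) (p : nat) (E : rel 'I_p) (n : nat) :
  naturally_ordered E -> CMF R E n -> Main R E n -> CMF R E n.+1.
Proof.
move=> Hn HC HM r g Hg.
have [F HF] : exists F : 'I_r -> ('I_p -> nat) * SPoly R p, forall i,
    (forall x : 'I_p, (n.+1 <= x)%N -> (F i).1 x = 0%N) /\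
    in_RSigmaE E (F i).2 /\ in_IG E (Sk R E (F i).1 * g i - (F i).2).
  apply: (@fchoice _ _ (fun i (kh : ('I_p -> nat) * SPoly R p) =>
    (forall x : 'I_p, (n.+1 <= x)%N -> kh.1 x = 0%N) /\
    in_RSigmaE E kh.2 /\ in_IG E (Sk R E kh.1 * g i - kh.2))).
  move=> i; have [_ [k [Hk [h [H1 H2]]]]] := Hg i.
  by exists (k, h).
pose K x := (\sum_(i < r) (F i).1 x)%N.
have HK : forall x : 'I_p, (n.+1 <= x)%N -> K x = 0%N.
  by move=> x Hx; rewrite /K big1 // => i _; case: (HF i) => H _; apply: H.
have HKi : forall i x, ((F i).1 x <= K x)%N.
  by move=> i x; rewrite /K (bigD1 i) //= leq_addr.
pose g' i := Sk R E (fun x => K x - (F i).1 x)%N * (F i).2.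
have Hg' : forall i, Good E n (g' i).
  move=> i; apply: Good_M => //; last by apply: Good_RE => //; case: (HF i) => _ [].
  apply: HM; apply: Sk_Gen => // x Hx; rewrite HK //.
have [q [Hq [c Hc]]] := HC r g' Hg'.
exists (fun x => q x + K x)%N; split.
  by move=> x Hx; rewrite HK // Hq // ltnW.
exists c => i; case: (Hc i) => Hc1 Hc2; split => //.
case: (HF i) => _ [Hh1 Hh2].
have -> : Sk R E (fun x => q x + K x)%N =
   Sk R E q * Sk R E (fun x => K x - (F i).1 x)%N * Sk R E (F i).1.
  rewrite Sk_add -mulrA; congr (_ * _); rewrite -Sk_add; apply: Sk_ext => x.
  by rewrite subnK.
have -> : Sk R E q * Sk R E (fun x => K x - (F i).1 x)%N * Sk R E (F i).1 * g i - c i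
  = (Sk R E q * Sk R E (fun x => K x - (F i).1 x)%N) * (Sk R E (F i).1 * g i - (F i).2)
    + (Sk R E q * g' i - c i) by rewrite /g'; ring.
apply: IG_D => //; apply: IG_M => //; apply: RS_M; apply: Sk_RS => //.
Qed.

Lemma Good_D (R : realType) (p : nat) (E : rel 'I_p) (n : nat) (g1 g2 : SPoly R p) :
  CMF R E n -> Good E n g1 -> Good E n g2 -> Good E n (g1 + g2).
Proof.
move=> HC H1 H2.
have [k [Hk [h Hh]]] := HC 2 (fun i : 'I_2 => if val i == 0%N then g1 else g2)
  (fun i => if val i == 0%N as b return Good E n (if b then g1 else g2) then H1 else H2).
split; first by apply: RS_D; [case: H1 | case: H2].
exists k; split => //; exists (h ord0 + h ord_max).
case: (Hh ord0) => /= A1 B1; case: (Hh ord_max) => /= A2 B2.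
split; first exact: RE_D.
have -> : Sk R E k * (g1 + g2) - (h ord0 + h ord_max) =
  (Sk R E k * g1 - h ord0) + (Sk R E k * g2 - h ord_max) by ring.
exact: IG_D.
Qed.

Lemma Main_from (R : realType) (p : nat) (E : rel 'I_p) (n : nat) :
  naturally_ordered E -> CMF R E n ->
  (forall u v : 'I_p, (u < n)%N -> (v < n)%N -> Good E n (sigma R u v)) ->
  Main R E n.
Proof.
move=> Hn HC HV g; elim=> *; [exact: Good_C | exact: HV | exact: Good_D | exact: Good_M].
Qed.

Lemma det_cast (R : realType) (p : nat) (m1 m2 : nat) (e : m1 = m2)
  (F : nat -> nat -> SPoly R p) :
  \det (\matrix_(a < m1, b < m1) F a b) = \det (\matrix_(a < m2, b < m2) F a b).
Proof. by subst. Qed.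

Lemma Good_N1 (R : realType) (p : nat) (E : rel 'I_p) (n : nat) :
  naturally_ordered E -> Good E n (-1 : SPoly R p).
Proof. by move=> Hn; rewrite -mpolyC1 -mpolyCN; apply: Good_C. Qed.
Lemma Good_0 (R : realType) (p : nat) (E : rel 'I_p) (n : nat) :
  naturally_ordered E -> Good E n (0 : SPoly R p).
Proof. by move=> Hn; rewrite -mpolyC0; apply: Good_C. Qed.
Lemma Good_1 (R : realType) (p : nat) (E : rel 'I_p) (n : nat) :
  naturally_ordered E -> Good E n (1 : SPoly R p).
Proof. by move=> Hn; rewrite -mpolyC1; apply: Good_C. Qed.

Lemma Good_det (R : realType) (p : nat) (E : rel 'I_p) (n m : nat)
  (A : 'M[SPoly R p]_m) :
  naturally_ordered E -> CMF R E n -> (forall i j, Good E n (A i j)) ->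
  Good E n (\det A).
Proof.
move=> Hn HC; apply: det_closed; [exact: Good_0|exact: Good_1|exact: Good_N1| |].
  by move=> f g; apply: Good_D.
by move=> f g; apply: Good_M.
Qed.

Lemma Good_IG (R : realType) (p : nat) (E : rel 'I_p) (n : nat) (g : SPoly R p) :
  in_RSigma g -> in_IG E g -> Good E n g.
Proof.
move=> H1 H2; split => //; exists (fun _ => 0%N); split => //; exists 0; split.
  by rewrite -mpolyC0; apply: RE_C.
by rewrite Sk0 // mul1r subr0.
Qed.

Lemma key (R : realType) (p : nat) (E : rel 'I_p) (n : nat) (u v : 'I_p) :
  naturally_ordered E -> Main R E n -> CMF R E n.+1 -> val v = n ->
  (u < n)%N -> ~~ E u v -> Good E n.+1 (pminor R (pa E v) * sigma R u v).
Proof.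
move=> Hn HM HC Hv Hu HE.
set K := pa E v.
have HK : forall x, x \in K -> (x < n)%N.
  by move=> x; rewrite inE => /Hn; rewrite Hv.
have Hlow : forall x y : 'I_p, (x < n)%N -> (y < n)%N -> Good E n.+1 (sigma R x y).
  by move=> x y Hx Hy; apply: (Good_mono (leqnSn n)); apply: HM; apply: GV.
have Hent : forall x y : 'I_p, x \in K -> y \in v :: enum K -> Good E n.+1 (sigma R x y).
  move=> x y Hx; rewrite inE => /orP [/eqP ->|Hy].
    by apply: Good_RE => //; apply: sigma_RE => //; right; rewrite inE in Hx.
  by apply: Hlow; apply: HK; rewrite // -mem_enum.
set M := \matrix_(a < size (u :: enum K), b < size (u :: enum K))
          sigma R (nth u (u :: enum K) a) (nth u (v :: enum K) b).
have Hcm : cond_minor R u v K = \det M by [].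
have Hexp := expand_det_row M ord0.
rewrite big_ord_recl in Hexp.
have H00 : cofactor M ord0 ord0 = pminor R K.
  rewrite /cofactor addn0 expr0 mul1r /pminor.
  have -> : \matrix_(a < #|K|, b < #|K|) sigma R (enum_val a) (enum_val b) =
    \matrix_(a < #|K|, b < #|K|) sigma R (nth u (enum K) a) (nth u (enum K) b).
    by apply/matrixP => a b; rewrite !mxE -!(enum_val_nth u).
  rewrite (det_cast (cardE K) (fun a b => sigma R (nth u (enum K) a) (nth u (enum K) b))).
  congr (\det _); apply/matrixP => a b; rewrite !mxE.
  by rewrite !lift0.
have M00 : M ord0 ord0 = sigma R u v by rewrite mxE.
rewrite H00 M00 -Hcm in Hexp.
set Sm := (\sum_(i < size (enum K)) _) in Hexp.
have HSm : Good E n.+1 Sm.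
  rewrite /Sm; apply: (big_ind (Good E n.+1)); [exact: Good_0|by move=> *; apply: Good_D|].
  move=> j _; apply: Good_M => //.
    rewrite /M mxE lift0 /=; apply: Hlow => //; apply: HK; rewrite -mem_enum.
    by apply: mem_nth.
  rewrite /cofactor; apply: Good_M => //.
    by elim: (_ + _)%N => [|m IH]; rewrite ?expr0 ?exprS; [apply: Good_1|apply: Good_M => //; apply: Good_N1].
  apply: Good_det => // a b; rewrite /M !mxE [X in nth u _ X]lift0 /=.
  apply: Hent; first by rewrite -mem_enum; apply: mem_nth.
  by apply: mem_nth; exact: (ltn_ord (lift (lift ord0 j) b)).
have -> : pminor R K * sigma R u v = cond_minor R u v K + (-1) * Sm.
  by rewrite Hexp; ring.
apply: Good_D => //; last by apply: Good_M => //; apply: Good_N1.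
apply: Good_IG; last by apply: IG_gen; rewrite // Hv.
rewrite Hcm; apply: det_closed; [exact: RS_0|exact: RS_1|apply/RS_N/RS_1|exact: RS_D|exact: RS_M|].
by move=> a b; rewrite mxE; apply: sigma_RS.
Qed.

Lemma lift_pm (R : realType) (p : nat) (E : rel 'I_p) (n : nat) (v : 'I_p)
  (s : SPoly R p) :
  val v = n -> in_RSigma s -> Good E n.+1 (pminor R (pa E v) * s) -> Good E n.+1 s.
Proof.
move=> Hv Hs [_ [k [Hk [h [Hh HI]]]]]; split => //.
exists (fun x => k x + (x == v))%N; split.
  move=> x Hx; rewrite Hk //; case: eqP => // Exv; move: Hx; rewrite Exv Hv ltnn //.
exists h; split => //; rewrite Sk_add.
have -> : Sk R E (fun x => nat_of_bool (x == v)) = pminor R (pa E v).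
  rewrite /Sk (bigD1 v) //= eqxx expr1 big1 ?mulr1 // => x /negbTE ->.
  by rewrite expr0.
by rewrite -mulrA.
Qed.

Lemma Main_step (R : realType) (p : nat) (E : rel 'I_p) (n : nat) :
  naturally_ordered E -> Main R E n -> CMF R E n.+1 -> Main R E n.+1.
Proof.
move=> Hn HM HC; apply: Main_from => //.
have Hcol : forall u v : 'I_p, (u < n.+1)%N -> val v = n -> Good E n.+1 (sigma R u v).
  move=> u v Hu Hv; have [<-|Huv] := eqVneq u v.
    by apply: Good_RE => //; apply: sigma_RE => //; left.
  have Hun : (u < n)%N.
    rewrite ltn_neqAle -ltnS Hu andbT; apply/eqP => Eun; move/eqP: Huv; apply.
    by apply: val_inj; rewrite /= Eun Hv.
  case HE: (E u v).
    by apply: Good_RE => //; apply: sigma_RE => //; right.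
  apply: (lift_pm Hv); first exact: sigma_RS.
  by apply: key => //; rewrite HE.
move=> u v Hu Hv; case: (eqVneq (val v) n) => [Ev|Nv]; first exact: Hcol.
case: (eqVneq (val u) n) => [Eu|Nu]; first by rewrite sigma_sym; apply: Hcol.
have Hu' : (u < n)%N by rewrite ltn_neqAle Nu -ltnS.
have Hv' : (v < n)%N by rewrite ltn_neqAle Nv -ltnS.
by apply: (Good_mono (leqnSn n)); apply: HM; apply: GV.
Qed.

Theorem mainTheorem9 (R : realType) (p : nat) (E : rel 'I_p)
  (Hnat : naturally_ordered E)
  (r : nat) (f : 'I_r -> SPoly R p) (Hf : forall i, in_RSigma (f i)) :
  exists (s : SPoly R p) (h : 'I_r -> SPoly R p),
    in_SG E s /\ (forall i, in_RSigmaE E (h i)) /\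
    (forall i, in_IG E (s * f i - h i)).
Proof.
have Hall : forall n, CMF R E n /\ Main R E n.
  elim=> [|n [HC HM]].
    split; first exact: CMF0.
    by apply: Main_from => //; first exact: CMF0.
  have HC' := CMF_step Hnat HC HM.
  by split => //; apply: Main_step.
have [HC HM] := Hall p.
have HG : forall i, Good E p (f i).
  move=> i; apply: HM; move: (Hf i); apply: uo_ind.
  - exact: GC.
  - exact: GD.
  - exact: GM.
  move=> v [a [b [Hab ->]]]; have -> : 'X_(mxvec_index a b) = sigma R a b.
    by rewrite /sigma Hab.
  by apply: GV.
have [k [_ [h Hh]]] := HC r f HG.
exists (Sk R E k), h; split; first by exists k.
by split => i; case: (Hh i).
Qed.
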